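(* In the setting described in the context, let $J=\mathbb{E}_{p_\phi(\tau)}\big[(1-\gamma)\sum_{t=0}^\infty\gamma^t r(s_t,a_t)\big]$ and, for $H\in\{0,\dots,K\}$, let $Z_H=\int p_\phi(\tau\mid H)\,\Psi(\tau,H)\,d\tau$ (assumed finite and positive, where $\tau$ ranges over length-$(H+1)$ trajectories). For any probability distribution $g$ on $\{0,\dots,K\}$ and any family of densities $q(\tau\mid H)$ on length-$(H+1)$ trajectories, define $$B(g,q)=\sum_{H=0}^K g(H)\int q(\tau\mid H)\log\frac{P_K(H)\,p_\phi(\tau\mid H)\,\Psi(\tau,H)}{g(H)\,q(\tau\mid H)}\,d\tau.$$ Then $\log J\ge B(g,q)$ for all such $g,q$, and equality $B(g^*,q^* )=\log J$ holds for $$q^*(\tau\mid H)=\frac{p_\phi(\tau\mid H)\Psi(\tau,H)}{Z_H},\qquad g^*(H)=\frac{P_K(H)Z_H}{\sum_{H'=0}^K P_K(H')Z_{H'}}.$$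
   Context: An MDP has states $s$, actions $a$, initial state distribution $p_0(s)$, transition density $p(s_{t+1}\mid s_t,a_t)$, nonnegative reward $r(s,a)\ge0$, discount $\gamma\in(0,1)$. An encoder $e_\phi(z\mid s)$ and latent policy $\pi_\phi(a\mid z)$ are conditional distributions; trajectories are $\tau=(s_0,a_0,z_0,s_1,a_1,z_1,\dots)$ with true distribution $p_\phi(\tau)=p_0(s_0)\prod_{t\ge0}p(s_{t+1}\mid s_t,a_t)\pi_\phi(a_t\mid z_t)e_\phi(z_t\mid s_t)$, and $Q(s,a)=\mathbb{E}_{p_\phi}[(1-\gamma)\sum_{t\ge0}\gamma^t r(s_t,a_t)\mid s_0=s,a_0=a]$. Fix $K\in\mathbb{N}$. The truncated geometric distribution is $P_K(H)=(1-\gamma)\gamma^H$ for $H\in\{0,\dots,K-1\}$, $P_K(K)=\gamma^K$, and $0$ for $H>K$. For $H\in\{0,\dots,K\}$, $p_\phi(\tau\mid H)=p_0(s_0)e_\phi(z_0\mid s_0)\pi_\phi(a_0\mid z_0)\prod_{t=1}^H p(s_t\mid s_{t-1},a_{t-1})\pi_\phi(a_t\mid z_t)e_\phi(z_t\mid s_t)$ is the distribution of the first $H+1$ steps of a trajectory, and $\Psi(\tau,H)=\mathbb{1}\{H\le K-1\}\,r(s_H,a_H)+\mathbb{1}\{H=K\}\,Q(s_H,a_H)$. *)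

(* Defs.v *)
From HB Require Import structures.
From mathcomp Require Import all_boot all_order all_algebra.
From mathcomp Require Import all_classical all_reals all_analysis.
Set Implicit Arguments. Unset Strict Implicit. Unset Printing Implicit Defensive.
Import Order.TTheory GRing.Theory Num.Theory.
Local Open Scope classical_set_scope.
Local Open Scope ring_scope.

Section MDP.
Context {R : realType} {dS dA dZ : measure_display}
  (S : measurableType dS) (A : measurableType dA) (Z : measurableType dZ)
  (muS : {measure set S -> \bar R}) (muA : {measure set A -> \bar R})
  (muZ : {measure set Z -> \bar R}).

Definition stepD : measure_display := ((dS, dA).-prod, dZ).-prod%mdisp.
Definition stepT : measurableType stepD := (S * A * Z)%type.
Definition st (x : stepT) : S := x.1.1.
Definition ac (x : stepT) : A := x.1.2.
Definition zt (x : stepT) : Z := x.2.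

(* trajectories with n+1 steps (s_0,a_0,z_0,...,s_n,a_n,z_n), as nested pairs *)
Fixpoint trajD (n : nat) : measure_display :=
  match n with 0 => stepD | n'.+1 => (trajD n', stepD).-prod%mdisp end.
Fixpoint trajT (n : nat) : measurableType (trajD n) :=
  match n return measurableType (trajD n) with
  | 0 => stepT
  | n'.+1 => (trajT n' * stepT)%type
  end.

(* the reference measure on one step is muS (x) muA (x) muZ; integrals over
   it are written as iterated integrals *)
Definition stepInt (f : stepT -> \bar R) : \bar R :=
  (\int[muS]_s \int[muA]_a \int[muZ]_z f ((s, a), z))%E.

(* integral "d tau" over trajectories with n+1 steps w.r.t. the product
   reference measure, as an iterated integral (Tonelli) *)
Fixpoint tint (n : nat) : (trajT n -> \bar R) -> \bar R :=
  match n return (trajT n -> \bar R) -> \bar R with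
  | 0 => fun f => stepInt f
  | n'.+1 => fun f => tint (fun tau => stepInt (fun x => f (tau, x)))
  end.

Definition sint (n : nat) (f : trajT n -> \bar R) : \bar R :=
  (tint (fun tau => maxe (f tau) 0) - tint (fun tau => maxe (- f tau) 0))%E.

Fixpoint lastx (n : nat) : trajT n -> stepT :=
  match n return trajT n -> stepT with
  | 0 => fun x => x
  | n'.+1 => fun tau => tau.2
  end.

Fixpoint dens (init : stepT -> R) (trans : stepT -> stepT -> R) (n : nat)
  : trajT n -> R :=
  match n return trajT n -> R with
  | 0 => fun x => init x
  | n'.+1 => fun tau => dens init trans tau.1 * trans (lastx tau.1) tau.2
  end.

End MDP.

Section Model.
Context {R : realType} {dS dA dZ : measure_display}
  (S : measurableType dS) (A : measurableType dA) (Z : measurableType dZ)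
  (muS : {measure set S -> \bar R}) (muA : {measure set A -> \bar R})
  (muZ : {measure set Z -> \bar R})
  (p0 : S -> R)
  (p : S -> A -> S -> R)   (* p s a s'   = p(s' | s, a)       *)
  (e : S -> Z -> R)        (* e s z      = e_phi(z | s)       *)
  (pi : Z -> A -> R)       (* pi z a     = pi_phi(a | z)      *)
  (r : S -> A -> R) (gamma : R) (K : nat).

Local Notation stepT := (stepT S A Z).
Local Notation trajT := (trajT S A Z).
Local Notation tint := (tint muS muA muZ).
Local Notation sint := (sint muS muA muZ).

Definition polDens (x : stepT) : R := e (st x) (zt x) * pi (zt x) (ac x).
Definition transDens (x y : stepT) : R := p (st x) (ac x) (st y) * polDens y.
Definition initDens (x : stepT) : R := p0 (st x) * polDens x.

Definition pphi (H : nat) : trajT H -> R := dens initDens transDens (n := H).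

Definition rlast (n : nat) (tau : trajT n) : R :=
  r (st (lastx tau)) (ac (lastx tau)).

(* E[ r(s_t,a_t) | s_0 = s, a_0 = a ] *)
Definition condRew (s : S) (a : A) (t : nat) : \bar R :=
  match t with
  | 0 => (r s a)%:E
  | t'.+1 => tint (fun tau : trajT t' =>
       (dens (fun y => p s a (st y) * polDens y) transDens tau * rlast tau)%:E)
  end.

Definition Qfun (s : S) (a : A) : \bar R :=
  (\sum_(0 <= t <oo) ((1 - gamma) * gamma ^+ t)%:E * condRew s a t)%E.

Definition Jobj : \bar R :=
  (\sum_(0 <= t <oo) ((1 - gamma) * gamma ^+ t)%:E *
     tint (fun tau : trajT t => (pphi tau * rlast tau)%:E))%E.

Definition PK (H : nat) : R :=
  if (H < K)%N then (1 - gamma) * gamma ^+ H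
  else if H == K then gamma ^+ K else 0.

Definition Psi (H : nat) (tau : trajT H) : \bar R :=
  if (H < K)%N then (rlast tau)%:E
  else if H == K then Qfun (st (lastx tau)) (ac (lastx tau)) else 0%E.

Definition ZH (H : nat) : \bar R :=
  tint (fun tau : trajT H => ((pphi tau)%:E * Psi tau)%E).

(* extended log: log 0 = -oo, log(+oo) = +oo *)
Definition elog (x : \bar R) : \bar R :=
  match x with
  | EFin y => if 0 < y then (ln y)%:E else -oo%E
  | +oo%E => +oo%E
  | -oo%E => -oo%E
  end.

(* q * log(c / q), with the convention 0 * log(...) = 0 *)
Definition qlog (q : R) (c : \bar R) : \bar R :=
  if q == 0 then 0%E else (q%:E * elog (c * (q^-1)%:E))%E.

(* B(g, q); a term with g(H) = 0 contributes 0 *)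
Definition Bbound (g : nat -> R) (q : forall H, trajT H -> R) : \bar R :=
  (\sum_(0 <= H < K.+1)
     (if g H == 0%R then 0
      else (g H)%:E * sint (fun tau : trajT H =>
              qlog (q H tau) ((PK H * pphi tau / g H)%:E * Psi tau))))%E.

Definition is_prob (g : nat -> R) : Prop :=
  (forall H, (H <= K)%N -> 0 <= g H) /\ \sum_(0 <= H < K.+1) g H = 1.

Definition is_traj_density (q : forall H, trajT H -> R) : Prop :=
  forall H, (H <= K)%N ->
    [/\ forall tau, 0 <= q H tau, measurable_fun setT (q H)
      & tint (fun tau => (q H tau)%:E) = 1%E].

Definition qstar (H : nat) (tau : trajT H) : R :=
  fine ((pphi tau)%:E * Psi tau)%E / fine (ZH H).

Definition gstar (H : nat) : R :=
  PK H * fine (ZH H) / \sum_(0 <= H' < K.+1) PK H' * fine (ZH H').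

End Model.

(* Main.v *)
Require Import Defs.
From HB Require Import structures.
From mathcomp Require Import all_boot all_order all_algebra.
From mathcomp Require Import all_classical all_reals all_analysis.
From mathcomp Require Import measurable_realfun.
From mathcomp Require Import ring lra.
Import Order.TTheory GRing.Theory Num.Theory.
Local Open Scope classical_set_scope.
Local Open Scope ring_scope.
Set Implicit Arguments. Unset Strict Implicit. Unset Printing Implicit Defensive.

Section PM.
Context d1 d2 (T1 : measurableType d1) (T2 : measurableType d2) (R : realType).
Variable m1 : {sigma_finite_measure set T1 -> \bar R}.
Variable m2 : {sigma_finite_measure set T2 -> \bar R}.

Lemma pm_sigma_finite : sigma_finite setT (m1 \x m2)%E.
Proof.
have /sigma_finiteP[F [TF ndF Foo]] := sigma_finiteT m1.
have /sigma_finiteP[G [TG ndG Goo]] := sigma_finiteT m2.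
exists (fun n => F n `*` G n).
 rewrite -setXTT TF TG predeqE => -[x y]; split.
    move=> [/= [n _ Fnx] [k _ Gky]]; exists (maxn n k) => //; split.
    - by move: x Fnx; exact/subsetPset/ndF/leq_maxl.
    - by move: y Gky; exact/subsetPset/ndG/leq_maxr.
  by move=> [n _ []/= ? ?]; split; exists n.
move=> k; have [? ?] := Foo k; have [? ?] := Goo k.
split; first exact: measurableX.
by rewrite product_measure1E// lte_mul_pinfty// ge0_fin_numE.
Qed.

Definition pmsf : {sigma_finite_measure set (T1 * T2)%type -> \bar R} :=
  HB.pack_for (SigmaFiniteMeasure.type _ R) (m1 \x m2)%E
    (Measure_isSigmaFinite.Build _ _ _ (m1 \x m2)%E pm_sigma_finite).

Lemma pmsf_int (f : (T1 * T2)%type -> \bar R) : measurable_fun setT f -> (forall x, 0 <= f x)%E ->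
  (\int[pmsf]_z f z = \int[m1]_x \int[m2]_y f (x, y))%E.
Proof. move=> mf f0; have := @fubini_tonelli1 _ _ _ _ _ m1 m2 f mf f0; rewrite /fubini_F => <-; by []. Qed.

Lemma pmsf_mF (f : (T1 * T2)%type -> \bar R) : measurable_fun setT f -> (forall x, 0 <= f x)%E ->
  measurable_fun setT (fun x => \int[m2]_y f (x, y))%E.
Proof. move=> mf f0; exact: (@measurable_fun_fubini_tonelli_F _ _ _ _ _ m2 f mf f0). Qed.
End PM.

Section Gen.
Context {d : measure_display} {T : measurableType d} {R : realType}.
Lemma int_mono (mu : {measure set T -> \bar R}) (f g : T -> \bar R) :
  (forall x, 0 <= f x)%E -> (forall x, f x <= g x)%E ->
  (\int[mu]_x f x <= \int[mu]_x g x)%E.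
Proof.
move=> f0 fg.
have g0 : forall x, (0 <= g x)%E by move=> x; exact: le_trans (f0 x) (fg x).
rewrite (ge0_integralE _ (fun x _ => f0 x)) (ge0_integralE _ (fun x _ => g0 x)).
apply: le_ereal_sup => _ [h hf <-]; exists h => //= x.
apply: le_trans (hf x) _.
rewrite /patch; case: ifP => // _; exact: fg.
Qed.

Lemma fine_int (mu : {measure set T -> \bar R}) (F : T -> \bar R) :
  measurable_fun setT F -> (forall x, 0 <= F x)%E -> (\int[mu]_x F x < +oo)%E ->
  (\int[mu]_x (fine (F x))%:E = \int[mu]_x F x)%E.
Proof.
move=> mF F0 Foo.
have iF : mu.-integrable setT F.
  apply/integrableP; split => //.
  under eq_integral => x _ do rewrite gee0_abs //.
  exact: Foo.
apply: ae_eq_integral => //.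
- apply/measurable_EFinP; exact: (measurableT_comp (fine_measurable measurableT) mF).
- apply: filterS (integrable_ae measurableT iF) => x /[apply] fx.
  by rewrite fineK.
Qed.

Lemma ge0_integrable (mu : {measure set T -> \bar R}) (F : T -> \bar R) :
  measurable_fun setT F -> (forall x, 0 <= F x)%E -> (\int[mu]_x F x < +oo)%E ->
  mu.-integrable setT F.
Proof.
move=> mF F0 Foo; apply/integrableP; split => //.
under eq_integral => x _ do rewrite gee0_abs //.
exact: Foo.
Qed.

Lemma integralE' (mu : {measure set T -> \bar R}) (v : T -> \bar R) :
  (\int[mu]_x v x = \int[mu]_x maxe (v x) 0 - \int[mu]_x maxe (- v x) 0)%E.
Proof.
rewrite integralE; congr (_ - _)%E; apply: eq_integral => x _.
  exact: funeposE.
exact: funenegE.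
Qed.
End Gen.

Section Tint.
Context {R : realType} {dS dA dZ : measure_display}
  (S : measurableType dS) (A : measurableType dA) (Z : measurableType dZ)
  (muS : {sigma_finite_measure set S -> \bar R})
  (muA : {sigma_finite_measure set A -> \bar R})
  (muZ : {sigma_finite_measure set Z -> \bar R}).
Local Notation stepT := (stepT S A Z).
Local Notation trajT := (trajT S A Z).
Local Notation tint := (tint muS muA muZ).
Local Notation stepInt := (stepInt muS muA muZ).

Definition smu : {sigma_finite_measure set stepT -> \bar R} := pmsf (pmsf muS muA) muZ.
Fixpoint tmu n : {sigma_finite_measure set (trajT n) -> \bar R} :=
  match n with 0 => smu | n'.+1 => pmsf (tmu n') smu end.

Lemma stepIntE (f : stepT -> \bar R) : measurable_fun setT f -> (forall x, 0 <= f x)%E ->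
  stepInt f = (\int[smu]_x f x)%E.
Proof.
move=> mf f0; rewrite /smu pmsf_int // pmsf_int //.
- exact: pmsf_mF.
- by move=> x; apply: integral_ge0.
Qed.

Lemma tintE n (f : trajT n -> \bar R) : measurable_fun setT f -> (forall x, 0 <= f x)%E ->
  tint f = (\int[tmu n]_x f x)%E.
Proof.
elim: n f => [|n IH] f mf f0; first exact: stepIntE.
have E : (fun tau => stepInt (fun x => f (tau, x))) = (fun tau => \int[smu]_x f (tau, x))%E.
  apply: funext => tau; apply: stepIntE => //.
  exact: measurable_fun_pair2.
transitivity (tint (fun tau : trajT n => stepInt (fun x => f (tau, x)))); first by [].
rewrite E IH.
- by symmetry; apply: (@pmsf_int _ _ _ _ _ (tmu n) smu).
- exact: pmsf_mF.
- by move=> ?; apply: integral_ge0.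
Qed.

Lemma stepInt_mono (f g : stepT -> \bar R) : (forall x, 0 <= f x)%E -> (forall x, f x <= g x)%E ->
  (stepInt f <= stepInt g)%E.
Proof.
move=> f0 fg; apply: int_mono => [s|s]; first by apply: integral_ge0 => a _; apply: integral_ge0.
apply: int_mono => [a|a]; first by apply: integral_ge0.
by apply: int_mono.
Qed.

Lemma stepInt_ge0 (f : stepT -> \bar R) : (forall x, 0 <= f x)%E -> (0 <= stepInt f)%E.
Proof. by move=> f0; apply: integral_ge0 => s _; apply: integral_ge0 => a _; apply: integral_ge0. Qed.

Lemma tint_ge0 n (f : trajT n -> \bar R) : (forall x, 0 <= f x)%E -> (0 <= tint f)%E.
Proof.
elim: n f => [|n IH] f f0; first exact: stepInt_ge0.
by apply: (IH (fun tau => stepInt (fun x => f (tau, x)))) => tau; apply: stepInt_ge0.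
Qed.

Lemma tint_mono n (f g : trajT n -> \bar R) : (forall x, 0 <= f x)%E -> (forall x, f x <= g x)%E ->
  (tint f <= tint g)%E.
Proof.
elim: n f g => [|n IH] f g f0 fg; first exact: stepInt_mono.
apply: (IH (fun tau => stepInt (fun x => f (tau, x))) (fun tau => stepInt (fun x => g (tau, x)))).
  by move=> tau; apply: stepInt_ge0.
by move=> tau; apply: stepInt_mono.
Qed.

Lemma sint_le n (f v : trajT n -> \bar R) : (forall x, f x <= v x)%E ->
  measurable_fun setT v -> (sint muS muA muZ f <= \int[tmu n]_x v x)%E.
Proof.
move=> fv mv; rewrite /sint integralE'.
have mvp : measurable_fun setT (fun x => maxe (v x) 0)%E.
  exact: (@measurable_maxe _ _ _ setT v (cst 0%E) mv (measurable_cst _)).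
have mvn : measurable_fun setT (fun x => maxe (- v x) 0)%E.
  have mo : measurable_fun setT (fun x => - v x)%E.
    exact: (measurableT_comp (oppe_measurable (D := setT)) mv).
  exact: (@measurable_maxe _ _ _ setT (fun x => - v x)%E (cst 0%E) mo (measurable_cst _)).
rewrite -(tintE mvp); last by move=> x; rewrite le_max lexx orbT.
rewrite -(tintE mvn); last by move=> x; rewrite le_max lexx orbT.
apply: leeB; apply: tint_mono => x.
- by rewrite le_max lexx orbT.
- by rewrite ge_max !le_max fv lexx !orbT.
- by rewrite le_max lexx orbT.
- by rewrite ge_max !le_max leeN2 fv lexx !orbT.
Qed.

Lemma sintE n (v : trajT n -> \bar R) :
  measurable_fun setT v -> sint muS muA muZ v = (\int[tmu n]_x v x)%E.
Proof.
move=> mv; rewrite /sint integralE'.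
have mvp : measurable_fun setT (fun x => maxe (v x) 0)%E.
  exact: (@measurable_maxe _ _ _ setT v (cst 0%E) mv (measurable_cst _)).
have mvn : measurable_fun setT (fun x => maxe (- v x) 0)%E.
  have mo : measurable_fun setT (fun x => - v x)%E.
    exact: (measurableT_comp (oppe_measurable (D := setT)) mv).
  exact: (@measurable_maxe _ _ _ setT (fun x => - v x)%E (cst 0%E) mo (measurable_cst _)).
rewrite -(tintE mvp); last by move=> x; rewrite le_max lexx orbT.
by rewrite -(tintE mvn); last by move=> x; rewrite le_max lexx orbT.
Qed.

Fixpoint tcat n m : trajT n -> trajT m -> trajT (m + n.+1) :=
  match m return trajT n -> trajT m -> trajT (m + n.+1) with
  | 0 => fun tau x => (tau, x)
  | m'.+1 => fun tau sig => (tcat tau sig.1, sig.2)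
  end.

Lemma tint_cat n m (F : trajT (m + n.+1) -> \bar R) :
  tint F = tint (fun tau : trajT n => tint (fun sig : trajT m => F (tcat tau sig))).
Proof.
elim: m F => [|m IH] F; first by [].
exact: (IH (fun rho => stepInt (fun x => F (rho, x)))).
Qed.

Lemma lastx_cat n m (tau : trajT n) (sig : trajT m) : lastx (tcat tau sig) = lastx sig.
Proof. by case: m sig. Qed.

Lemma dens_cat (init : stepT -> R) (trans : stepT -> stepT -> R) n m (tau : trajT n) (sig : trajT m) :
  dens init trans (tcat tau sig) = dens init trans tau * dens (trans (lastx tau)) trans sig.
Proof.
elim: m sig => [|m IH] sig; first by [].
case: sig => sig x /=. rewrite IH lastx_cat. by rewrite mulrA.
Qed.
End Tint.




Section Alg.
Context {R : realType}.

Lemma ln_le_sub1 (x : R) : 0 < x -> ln x <= x - 1.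
Proof.
move=> x0.
have h : x <= expR (x - 1) by have := expR_ge1Dx (x - 1); rewrite addrC subrK.
by rewrite -(expRK (x - 1)) ler_ln // posrE expR_gt0.
Qed.

Lemma elog_bound (L : R) (y : \bar R) : 0 < L -> (0 <= y)%E ->
  (elog y <= (ln L - 1)%:E + (L^-1)%:E * y)%E.
Proof.
move=> L0; case: y => [y||] //= y0.
  case: ifP => ypos; last exact: leNye.
  rewrite -EFinM -EFinD lee_fin.
  have -> : y = L * (L^-1 * y) by rewrite mulrA mulfV ?gt_eqF // mul1r.
  rewrite lnM ?posrE // ?mulr_gt0 ?invr_gt0 //.
  rewrite mulrA mulVf ?gt_eqF // mul1r.
  have := ln_le_sub1 (x := L^-1 * y); rewrite mulr_gt0 ?invr_gt0 // => /(_ isT).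
  lra.
by rewrite gt0_muley ?lte_fin ?invr_gt0 // addey.
Qed.

Lemma qlog_bound (L w : R) (c : \bar R) : 0 < L -> 0 <= w -> (0 <= c)%E ->
  (qlog w c <= (w * (ln L - 1))%:E + (L^-1)%:E * c)%E.
Proof.
move=> L0 w0 c0; rewrite /qlog; have [->|wn0] := eqVneq w 0.
  by rewrite mul0r add0e mule_ge0 // lee_fin invr_ge0 ltW.
have wpos : 0 < w by rewrite lt_def wn0.
have y0 : (0 <= c * (w^-1)%:E)%E by rewrite mule_ge0 // lee_fin invr_ge0.
have w0' : (0 <= w%:E)%E by rewrite lee_fin ltW.
apply: le_trans (lee_wpmul2l w0' (elog_bound L0 y0)) _.
rewrite muleDr // EFinM muleCA muleA -EFinM (mulrC w) EFinM -muleA [(w%:E * _)%E]muleC.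
by rewrite -[(c * _ * _)%E]muleA -(EFinM w^-1 w) mulVf // mule1.
Qed.

Lemma maxr_pm (x : R) : Num.max x 0 - Num.max (- x) 0 = x.
Proof.
rewrite !maxEle; case: (lerP x 0) => h1; case: (lerP (- x) 0) => h2; lra.
Qed.

Lemma max_decomp (u d : R) :
  Num.max (u + d) 0 + Num.max (- u) 0 = Num.max (- (u + d)) 0 + Num.max u 0 + d.
Proof. have h1 := maxr_pm (u + d); have h2 := maxr_pm u; lra. Qed.

Lemma qlog_const (k z : R) (u : \bar R) : 0 < z -> 0 < k -> (0 <= u)%E ->
  qlog (fine u / z) (k%:E * u) = ((ln (k * z))%:E * (fine u / z)%:E)%E.
Proof.
move=> z0 k0 u0; rewrite /qlog; case: eqVneq => [->|qn0]; first by rewrite mule0.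
have fu0 : fine u != 0 by apply: contra_neq qn0 => ->; rewrite mul0r.
case: u u0 fu0 qn0 => [x||] //=; last by rewrite eqxx.
move=> x0 fx qn0.
have xpos : 0 < x by rewrite lt_def fx -lee_fin.
rewrite -!EFinM /=.
have -> : k * x * (x / z)^-1 = k * z by field; apply/andP; split; rewrite gt_eqF.
by rewrite mulr_gt0 // -EFinM mulrC.
Qed.
End Alg.

Section Meas.
Context {R : realType} {dS dA dZ : measure_display}
  (S : measurableType dS) (A : measurableType dA) (Z : measurableType dZ).
Local Notation stepT := (stepT S A Z).
Local Notation trajT := (trajT S A Z).

Lemma m_st : measurable_fun setT (@st _ _ _ S A Z).
Proof. exact: measurableT_comp measurable_fst measurable_fst. Qed.
Lemma m_ac : measurable_fun setT (@ac _ _ _ S A Z).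
Proof. exact: measurableT_comp measurable_snd measurable_fst. Qed.
Lemma m_zt : measurable_fun setT (@zt _ _ _ S A Z).
Proof. exact: measurable_snd. Qed.

Lemma m_lastx n : measurable_fun setT (@lastx _ _ _ S A Z n).
Proof. by case: n => [|n]; [exact: measurable_id | exact: measurable_snd]. Qed.

Lemma m_dens (init : stepT -> R) (trans : stepT -> stepT -> R) :
  measurable_fun setT init ->
  measurable_fun setT (fun xy : stepT * stepT => trans xy.1 xy.2) ->
  forall n, measurable_fun setT (@dens _ _ _ _ S A Z init trans n).
Proof.
move=> mi mt; elim => [|n IH] //=.
apply: measurable_funM; first exact: measurableT_comp IH measurable_fst.
exact: (measurableT_comp mt (measurable_fun_pair (measurableT_comp (m_lastx (n:=n)) measurable_fst) measurable_snd)).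
Qed.

Lemma m_densP (trans : stepT -> stepT -> R) :
  measurable_fun setT (fun xy : stepT * stepT => trans xy.1 xy.2) ->
  forall n, measurable_fun setT (fun xs : stepT * trajT n => @dens _ _ _ _ S A Z (trans xs.1) trans n xs.2).
Proof.
move=> mt; elim => [|n IH] //=.
apply: measurable_funM.
  exact: (measurableT_comp IH (measurable_fun_pair measurable_fst (measurableT_comp measurable_fst measurable_snd))).
exact: (measurableT_comp mt (measurable_fun_pair (measurableT_comp (m_lastx (n:=n)) (measurableT_comp measurable_fst measurable_snd)) (measurableT_comp measurable_snd measurable_snd))).
Qed.
End Meas.

Section Model.
Context {R : realType} {dS dA dZ : measure_display}
  (S : measurableType dS) (A : measurableType dA) (Z : measurableType dZ)
  (muS : {sigma_finite_measure set S -> \bar R})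
  (muA : {sigma_finite_measure set A -> \bar R})
  (muZ : {sigma_finite_measure set Z -> \bar R})
  (p0 : S -> R) (p : S -> A -> S -> R) (e : S -> Z -> R) (pi : Z -> A -> R)
  (r : S -> A -> R) (gamma : R) (K : nat).
Hypothesis p0_ge0 : forall s, 0 <= p0 s.
Hypothesis mp0 : measurable_fun setT p0.
Hypothesis p_ge0 : forall s a s', 0 <= p s a s'.
Hypothesis mp : measurable_fun setT (fun x : S * A * S => p x.1.1 x.1.2 x.2).
Hypothesis e_ge0 : forall s z, 0 <= e s z.
Hypothesis me : measurable_fun setT (fun x : S * Z => e x.1 x.2).
Hypothesis pi_ge0 : forall z a, 0 <= pi z a.
Hypothesis mpi : measurable_fun setT (fun x : Z * A => pi x.1 x.2).
Hypothesis r_ge0 : forall s a, 0 <= r s a.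
Hypothesis mr : measurable_fun setT (fun x : S * A => r x.1 x.2).
Hypothesis gamma01 : 0 < gamma < 1.

Local Notation stepT := (stepT S A Z).
Local Notation trajT := (trajT S A Z).
Local Notation tint := (tint muS muA muZ).
Local Notation polDens := (polDens e pi).
Local Notation transDens := (transDens p e pi).
Local Notation initDens := (initDens p0 e pi).
Local Notation pphi := (pphi p0 p e pi).
Local Notation rlast := (@Defs.rlast _ _ _ _ S A Z r).
Local Notation condRew := (condRew muS muA muZ p e pi r).
Local Notation Qfun := (Qfun muS muA muZ p e pi r gamma).
Local Notation Psi := (Psi muS muA muZ p e pi r gamma K).
Local Notation ZH := (ZH muS muA muZ p0 p e pi r gamma K).
Local Notation tmu := (tmu muS muA muZ).
Local Notation smu := (smu muS muA muZ).
Local Notation mst := (@m_st _ _ _ S A Z).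
Local Notation mac := (@m_ac _ _ _ S A Z).
Local Notation mzt := (@m_zt _ _ _ S A Z).

Lemma polDens_ge0 x : 0 <= polDens x.
Proof. by rewrite /Defs.polDens mulr_ge0. Qed.
Lemma transDens_ge0 x y : 0 <= transDens x y.
Proof. by rewrite /Defs.transDens mulr_ge0 // polDens_ge0. Qed.
Lemma initDens_ge0 x : 0 <= initDens x.
Proof. by rewrite /Defs.initDens mulr_ge0 // polDens_ge0. Qed.
Lemma dens_ge0 (init : stepT -> R) (trans : stepT -> stepT -> R) :
  (forall x, 0 <= init x) -> (forall x y, 0 <= trans x y) ->
  forall n (tau : trajT n), 0 <= dens init trans tau.
Proof. by move=> i0 t0; elim => [|n IH] tau //=; rewrite mulr_ge0. Qed.
Lemma pphi_ge0 n (tau : trajT n) : 0 <= pphi tau.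
Proof. apply: dens_ge0; [exact: initDens_ge0 | exact: transDens_ge0]. Qed.
Lemma rlast_ge0 n (tau : trajT n) : 0 <= rlast tau.
Proof. exact: r_ge0. Qed.

Lemma m_polDens : measurable_fun setT polDens.
Proof.
apply: measurable_funM.
  exact: (measurableT_comp me (measurable_fun_pair mst mzt)).
exact: (measurableT_comp mpi (measurable_fun_pair mzt mac)).
Qed.

Lemma m_trans : measurable_fun setT (fun xy : stepT * stepT => transDens xy.1 xy.2).
Proof.
apply: measurable_funM.
  exact: (measurableT_comp mp (measurable_fun_pair (measurable_fun_pair (measurableT_comp mst measurable_fst) (measurableT_comp mac measurable_fst)) (measurableT_comp mst measurable_snd))).
exact: (measurableT_comp m_polDens measurable_snd).
Qed.

Lemma m_init : measurable_fun setT initDens.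
Proof.
apply: measurable_funM; last exact: m_polDens.
exact: (measurableT_comp mp0 mst).
Qed.

Lemma m_pphi n : measurable_fun setT (pphi (H:=n)).
Proof. exact: (m_dens m_init m_trans). Qed.

Lemma m_rlast n : measurable_fun setT (rlast (n:=n)).
Proof.
exact: (measurableT_comp mr (measurable_fun_pair (measurableT_comp mst (m_lastx (n:=n))) (measurableT_comp mac (m_lastx (n:=n))))).
Qed.

Definition crInt t' (x : stepT) (sig : trajT t') : \bar R :=
  (dens (transDens x) transDens sig * rlast sig)%:E.
Arguments crInt : clear implicits.

Lemma crInt_ge0 t' x sig : (0 <= crInt t' x sig)%E.
Proof.
by rewrite lee_fin mulr_ge0 // ?rlast_ge0 // dens_ge0 // => *; exact: transDens_ge0.
Qed.

Arguments crInt_ge0 : clear implicits.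
Lemma m_crInt t' : measurable_fun setT (fun xs : stepT * trajT t' => crInt t' xs.1 xs.2).
Proof.
apply/measurable_EFinP; apply: measurable_funM.
  exact: (m_densP m_trans (n:=t')).
exact: (measurableT_comp (m_rlast (n:=t')) measurable_snd).
Qed.

Lemma condRewE t' x : condRew (st x) (ac x) t'.+1 = (\int[tmu t']_sig crInt t' x sig)%E.
Proof.
rewrite /Defs.condRew; apply: (tintE muS muA muZ (f := crInt t' x)).
  exact: (measurable_fun_pair2 x (m_crInt (t':=t'))).
by move=> ?; exact: crInt_ge0.
Qed.

Lemma condRew_ge0 s a t : (0 <= condRew s a t)%E.
Proof.
case: t => [|t] /=; first by rewrite lee_fin r_ge0.
apply: tint_ge0 => tau; rewrite lee_fin mulr_ge0 // ?rlast_ge0 // dens_ge0 // => *.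
  by rewrite mulr_ge0 // polDens_ge0.
exact: transDens_ge0.
Qed.

Lemma m_condRew t : measurable_fun setT (fun x : stepT => condRew (st x) (ac x) t).
Proof.
case: t => [|t'].
  apply/measurable_EFinP.
  exact: (measurableT_comp mr (measurable_fun_pair mst mac)).
have -> : (fun x : stepT => condRew (st x) (ac x) t'.+1) =
   (fun x => \int[tmu t']_sig crInt t' x sig)%E by apply: funext => x; exact: condRewE.
exact: (pmsf_mF (tmu t') (m_crInt (t':=t')) (fun xs => crInt_ge0 t' xs.1 xs.2)).
Qed.

Lemma coef_ge0 t : 0 <= (1 - gamma) * gamma ^+ t.
Proof.
case/andP: gamma01 => g0 g1.
by rewrite mulr_ge0 ?subr_ge0 ?exprn_ge0 // ltW.
Qed.

Lemma Q_ge0 s a : (0 <= Qfun s a)%E.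
Proof.
apply: nneseries_ge0 => t _ _; apply: mule_ge0; last exact: condRew_ge0.
by rewrite lee_fin coef_ge0.
Qed.

Lemma m_Q : measurable_fun setT (fun x : stepT => Qfun (st x) (ac x)).
Proof.
rewrite /Defs.Qfun.
apply: (ge0_emeasurable_sum (P := xpredT)
  (h := fun t x => ((1 - gamma) * gamma ^+ t)%:E * condRew (st x) (ac x) t)%E).
  move=> t x _ _; apply: mule_ge0; last exact: condRew_ge0.
  by rewrite lee_fin coef_ge0.
move=> t _; apply: measurable_funeM; exact: m_condRew.
Qed.

Lemma Psi_ge0 H (tau : trajT H) : (0 <= Psi tau)%E.
Proof.
rewrite /Defs.Psi; case: ifP => _; first by rewrite lee_fin rlast_ge0.
by case: ifP => _ //; exact: Q_ge0.
Qed.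

Lemma m_Psi H : measurable_fun setT (Psi (H:=H)).
Proof.
rewrite /Defs.Psi; have [hk|hk] := ltnP H K.
  apply/measurable_EFinP; exact: m_rlast.
have [->|hK] := eqVneq H K.
  exact: (measurableT_comp m_Q (m_lastx (n:=K))).
exact: measurable_cst.
Qed.

Lemma m_ZHint H : measurable_fun setT (fun tau : trajT H => ((pphi tau)%:E * Psi tau)%E).
Proof.
apply: emeasurable_funM; last exact: m_Psi.
apply/measurable_EFinP; exact: m_pphi.
Qed.

Lemma ZHint_ge0 H (tau : trajT H) : (0 <= (pphi tau)%:E * Psi tau)%E.
Proof. by apply: mule_ge0; [rewrite lee_fin pphi_ge0 | exact: Psi_ge0]. Qed.

Definition Et t := tint (fun tau : trajT t => (pphi tau * rlast tau)%:E).
Definition at_ t := (((1 - gamma) * gamma ^+ t)%:E * Et t)%E.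

Lemma Et_ge0 t : (0 <= Et t)%E.
Proof. by apply: tint_ge0 => tau; rewrite lee_fin mulr_ge0 ?pphi_ge0 ?rlast_ge0. Qed.
Lemma at_ge0 t : (0 <= at_ t)%E.
Proof. by apply: mule_ge0; [rewrite lee_fin coef_ge0 | exact: Et_ge0]. Qed.

Lemma ZH_lt H : (H < K)%N -> ((PK gamma K H)%:E * ZH H = at_ H)%E.
Proof.
move=> hk; rewrite /at_ /PK hk; congr (_ * _)%E.
rewrite /Defs.ZH /Et; congr Defs.tint; apply: funext => tau.
by rewrite /Defs.Psi hk EFinM.
Qed.

Definition Ft n t (tau : trajT n) :=
  ((pphi tau)%:E * condRew (st (lastx tau)) (ac (lastx tau)) t)%E.

Lemma Ft_ge0 n t (tau : trajT n) : (0 <= Ft t tau)%E.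
Proof. by apply: mule_ge0; [rewrite lee_fin pphi_ge0 | exact: condRew_ge0]. Qed.

Lemma m_Ft n t : measurable_fun setT (@Ft n t).
Proof.
apply: emeasurable_funM; first by apply/measurable_EFinP; exact: m_pphi.
exact: (measurableT_comp (m_condRew t) (m_lastx (n:=n))).
Qed.

Lemma tint_Ft n t : tint (@Ft n t) = Et (t + n).
Proof.
case: t => [|t'].
  by rewrite add0n /Et; congr Defs.tint; apply: funext => tau; rewrite /Ft /= EFinM.
rewrite addSnnS /Et (tint_cat muS muA muZ (n:=n) (m:=t')).
congr Defs.tint; apply: funext => tau.
have -> : (fun sig : trajT t' => (pphi (tcat tau sig) * rlast (tcat tau sig))%:E) =
    (fun sig => (pphi tau)%:E * crInt t' (lastx tau) sig)%E.
  apply: funext => sig.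
  by rewrite /crInt -EFinM /Defs.pphi dens_cat /Defs.rlast lastx_cat mulrA.
rewrite (tintE muS muA muZ); last first.
- by move=> sig; apply: mule_ge0; [rewrite lee_fin pphi_ge0 | exact: crInt_ge0].
- apply: measurable_funeM.
  exact: (measurable_fun_pair2 (lastx tau) (m_crInt (t':=t'))).
rewrite ge0_integralZl_EFin //.
- by rewrite /Ft condRewE.
- by move=> sig _; exact: crInt_ge0.
- exact: (measurable_fun_pair2 (lastx tau) (m_crInt (t':=t'))).
- exact: pphi_ge0.
Qed.

Lemma ZH_K : ((PK gamma K K)%:E * ZH K = \sum_(0 <= t <oo) at_ (t + K))%E.
Proof.
rewrite /PK ltnn eqxx.
have -> : ZH K = (\sum_(0 <= t <oo) ((1 - gamma) * gamma ^+ t)%:E * Et (t + K))%E.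
  rewrite /Defs.ZH (tintE muS muA muZ (m_ZHint (H:=K)) (@ZHint_ge0 K)).
  have -> : (fun tau : trajT K => (pphi tau)%:E * Psi tau)%E =
      (fun tau => \sum_(0 <= t <oo) ((1 - gamma) * gamma ^+ t)%:E * Ft t tau)%E.
    apply: funext => tau; rewrite /Defs.Psi ltnn eqxx /Defs.Qfun.
    rewrite -nneseriesZl; last first.
      by move=> t _; apply: mule_ge0; [rewrite lee_fin coef_ge0 | exact: condRew_ge0].
    apply: eq_eseriesr => t _; rewrite /Ft; exact: muleCA.
  rewrite integral_nneseries //; last first.
  - by move=> t x _; apply: mule_ge0; [rewrite lee_fin coef_ge0 | exact: Ft_ge0].
  - by move=> t; apply: measurable_funeM; exact: m_Ft.
  apply: eq_eseriesr => t _.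
  rewrite ge0_integralZl_EFin //; last exact: coef_ge0.
  - by rewrite -(tintE muS muA muZ (m_Ft (n:=K) t) (@Ft_ge0 K t)) tint_Ft.
  - by move=> x _; exact: Ft_ge0.
  - exact: m_Ft.
rewrite -nneseriesZl; last first.
  by move=> t _; apply: mule_ge0; [rewrite lee_fin coef_ge0 | exact: Et_ge0].
apply: eq_eseriesr => t _; rewrite /at_ muleA -EFinM; congr (_ * _)%E; congr EFin.
by rewrite exprD mulrCA [gamma ^+ t * _]mulrC.
Qed.

Lemma Jobj_split : Jobj muS muA muZ p0 p e pi r gamma =
  (\sum_(0 <= H < K) at_ H + \sum_(0 <= t <oo) at_ (t + K))%E.
Proof.
rewrite /Defs.Jobj (nneseries_split 0 K); last by move=> k _; exact: at_ge0.
rewrite add0n nneseries_addn //; exact: at_ge0.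
Qed.

Hypothesis hZ : forall H, (H <= K)%N -> (0 < ZH H < +oo)%E.

Definition Lsum := \sum_(0 <= H < K.+1) PK gamma K H * fine (ZH H).

Lemma ZH_fin H : (H <= K)%N -> ZH H \is a fin_num.
Proof. by move=> hH; have /andP[h1 h2] := hZ hH; rewrite ge0_fin_numE // ltW. Qed.

Lemma fZ_gt0 H : (H <= K)%N -> 0 < fine (ZH H).
Proof. by move=> hH; apply: fine_gt0; exact: hZ. Qed.

Lemma PK_gt0 H : (H <= K)%N -> 0 < PK gamma K H.
Proof.
case/andP: gamma01 => g0 g1 hH; rewrite /PK.
case: ifP => hk; first by rewrite mulr_gt0 ?subr_gt0 // exprn_gt0.
case: ifP => hK; first by rewrite exprn_gt0.
by move: hH; rewrite leq_eqVlt hK hk.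
Qed.

Lemma PK_ge0 H : 0 <= PK gamma K H.
Proof.
case/andP: gamma01 => g0 g1; rewrite /PK.
case: ifP => _; first by rewrite mulr_ge0 ?subr_ge0 ?exprn_ge0 // ltW.
by case: ifP => _ //; rewrite exprn_ge0 // ltW.
Qed.

Lemma ZH_ge0 H : (0 <= ZH H)%E.
Proof. by apply: tint_ge0 => tau; exact: ZHint_ge0. Qed.

Lemma Lsum_gt0 : 0 < Lsum.
Proof.
rewrite /Lsum big_nat_recr //=.
have a0 : 0 <= \sum_(0 <= H < K) PK gamma K H * fine (ZH H).
  by apply: sumr_ge0 => H _; rewrite mulr_ge0 ?PK_ge0 // fine_ge0 // ZH_ge0.
have b0 : 0 < PK gamma K K * fine (ZH K) by rewrite mulr_gt0 ?PK_gt0 ?fZ_gt0.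
lra.
Qed.

Lemma Jobj_L : Jobj muS muA muZ p0 p e pi r gamma = Lsum%:E.
Proof.
rewrite Jobj_split /Lsum big_nat_recr //= EFinD -sumEFin; congr (_ + _)%E.
  apply: eq_big_nat => H /andP[_ hk].
  by rewrite EFinM fineK ?ZH_fin ?ZH_lt // ltnW.
by rewrite -ZH_K EFinM fineK // ZH_fin.
Qed.

Lemma cE H (k : R) (tau : trajT H) :
  ((PK gamma K H * pphi tau / k)%:E * Psi tau = (PK gamma K H / k)%:E * ((pphi tau)%:E * Psi tau))%E.
Proof. by rewrite muleA -EFinM mulrAC. Qed.

Lemma term_le (g : nat -> R) (q : forall H, trajT H -> R) H : (H <= K)%N -> 0 < g H ->
  (forall tau, 0 <= q H tau) -> measurable_fun setT (q H) ->
  tint (fun tau => (q H tau)%:E) = 1%E ->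
  ((g H)%:E * sint muS muA muZ (fun tau : trajT H =>
      qlog (q H tau) ((PK gamma K H * pphi tau / g H)%:E * Psi tau))
   <= (g H * (ln Lsum - 1) + PK gamma K H * fine (ZH H) / Lsum)%:E)%E.
Proof.
move=> hH g0 q0 mq q1.
set al := ln Lsum - 1.
set c := fun tau : trajT H => ((PK gamma K H * pphi tau / g H)%:E * Psi tau)%E.
have k0 : 0 <= PK gamma K H / g H by rewrite divr_ge0 ?PK_ge0 // ltW.
have c0 : forall tau, (0 <= c tau)%E.
  by move=> tau; rewrite /c cE mule_ge0 // ?lee_fin // ZHint_ge0.
have mc : measurable_fun setT c.
  have -> : c = (fun tau => (PK gamma K H / g H)%:E * ((pphi tau)%:E * Psi tau))%E.
    by apply: funext => tau; rewrite /c cE.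
  apply: measurable_funeM; exact: m_ZHint.
have intc : (\int[tmu H]_x c x = (PK gamma K H / g H)%:E * ZH H)%E.
  have -> : c = (fun tau => (PK gamma K H / g H)%:E * ((pphi tau)%:E * Psi tau))%E.
    by apply: funext => tau; rewrite /c cE.
  rewrite (ge0_integralZl_EFin (tmu H) measurableT (fun x _ => @ZHint_ge0 H x) (m_ZHint (H:=H)) k0).
  by rewrite /Defs.ZH (tintE muS muA muZ (m_ZHint (H:=H)) (@ZHint_ge0 H)).
have ic : (tmu H).-integrable setT c.
  apply: ge0_integrable => //; rewrite intc -(fineK (ZH_fin hH)) -EFinM; exact: ltry.
have mw : measurable_fun setT (fun tau => (q H tau)%:E).
  by apply/measurable_EFinP.
have intw : (\int[tmu H]_x (q H x)%:E = 1)%E.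
  by rewrite -(tintE muS muA muZ mw) // => x; rewrite lee_fin.
have iw : (tmu H).-integrable setT (fun tau => (q H tau)%:E).
  apply: ge0_integrable; [exact: mw | by move=> x; rewrite lee_fin | by rewrite intw ltry].
set v := fun tau => (al%:E * (q H tau)%:E + (Lsum^-1)%:E * c tau)%E.
have fv : forall tau, (qlog (q H tau) (c tau) <= v tau)%E.
  move=> tau; apply: le_trans (qlog_bound Lsum_gt0 (q0 tau) (c0 tau)) _.
  by rewrite /v EFinM muleC.
have iv1 := integrableZl measurableT al iw.
have iv2 := integrableZl measurableT (Lsum^-1) ic.
have mv : measurable_fun setT v.
  by apply: emeasurable_funD; apply: measurable_funeM.
have := sint_le muS muA muZ fv mv.
rewrite /v integralD // integralZl // integralZl // intw intc mule1 => hle.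
have g0' : (0 <= (g H)%:E)%E by rewrite lee_fin ltW.
apply: le_trans (lee_wpmul2l g0' hle) _.
rewrite -(fineK (ZH_fin hH)) -!EFinM /= lee_fin le_eqVlt; apply/orP; left; apply/eqP.
have L0 := Lsum_gt0.
rewrite mulrDr; congr (_ + _).
field; apply/andP; split; rewrite gt_eqF //.
Qed.

Lemma elogJ : elog (Jobj muS muA muZ p0 p e pi r gamma) = (ln Lsum)%:E.
Proof. by rewrite Jobj_L /= Lsum_gt0. Qed.

Lemma part1 (g : nat -> R) (q : forall H, trajT H -> R) :
  is_prob K g -> is_traj_density muS muA muZ K q ->
  (Bbound muS muA muZ p0 p e pi r gamma K g q <= elog (Jobj muS muA muZ p0 p e pi r gamma))%E.
Proof.
case=> g0 g1 hq; rewrite elogJ.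
apply: (@le_trans _ _ (\sum_(0 <= H < K.+1)
   (g H * (ln Lsum - 1) + PK gamma K H * fine (ZH H) / Lsum)%:E)%E).
  rewrite /Defs.Bbound big_nat_cond [in X in (_ <= X)%E]big_nat_cond.
  apply: lee_sum => H /andP[/andP[_ hH] _].
  have hH' : (H <= K)%N by [].
  case: eqP => [->|gn0].
    rewrite mul0r add0r lee_fin divr_ge0 ?mulr_ge0 ?PK_ge0 ?fine_ge0 ?ZH_ge0 //.
    exact: ltW Lsum_gt0.
  have gpos : 0 < g H by rewrite lt_def; apply/andP; split; [apply/eqP|exact: g0].
  case: (hq H hH') => q0 mq q1; exact: term_le.
rewrite sumEFin lee_fin big_split /= -mulr_suml -mulr_suml g1 mul1r -/Lsum.
by rewrite mulfV ?gt_eqF ?Lsum_gt0 // subrK.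
Qed.

Local Notation gs := (gstar muS muA muZ p0 p e pi r gamma K).
Local Notation qs := (qstar muS muA muZ p0 p e pi r gamma K).

Lemma gsE H : gs H = PK gamma K H * fine (ZH H) / Lsum.
Proof. by []. Qed.

Lemma gs_gt0 H : (H <= K)%N -> 0 < gs H.
Proof. by move=> hH; rewrite gsE divr_gt0 ?mulr_gt0 ?PK_gt0 ?fZ_gt0 ?Lsum_gt0. Qed.

Lemma m_qs H : measurable_fun setT (qs (H:=H)).
Proof.
apply: measurable_funM; last exact: measurable_cst.
exact: (measurableT_comp (fine_measurable measurableT) (m_ZHint (H:=H))).
Qed.

Lemma qs_ge0 H (tau : trajT H) : 0 <= qs tau.
Proof. by rewrite /qstar divr_ge0 // fine_ge0 // ?ZH_ge0 // ZHint_ge0. Qed.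

Lemma int_qs H : (H <= K)%N -> (\int[tmu H]_x (qs x)%:E = 1)%E.
Proof.
move=> hH.
have z0 := fZ_gt0 hH.
have -> : (fun x : trajT H => (qs x)%:E) =
   (fun x => ((fine (ZH H))^-1)%:E * (fine ((pphi x)%:E * Psi x))%:E)%E.
  by apply: funext => x; rewrite /qstar -EFinM mulrC.
have mf : measurable_fun setT (fun x : trajT H => (fine ((pphi x)%:E * Psi x))%:E).
  apply/measurable_EFinP.
  exact: (measurableT_comp (fine_measurable measurableT) (m_ZHint (H:=H))).
rewrite (ge0_integralZl_EFin (tmu H) measurableT _ mf); last by rewrite invr_ge0 ltW.
  have intZ : (\int[tmu H]_x ((pphi x)%:E * Psi x) = ZH H)%E.
    by rewrite /Defs.ZH (tintE muS muA muZ (m_ZHint (H:=H)) (@ZHint_ge0 H)).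
  rewrite fine_int //.
  - by rewrite intZ -(fineK (ZH_fin hH)) -EFinM mulVf // gt_eqF.
  - exact: m_ZHint.
  - exact: ZHint_ge0.
  - by rewrite intZ; case/andP: (hZ hH).
by move=> x _; rewrite lee_fin fine_ge0 // ZHint_ge0.
Qed.

Lemma term_eq H : (H <= K)%N ->
  sint muS muA muZ (fun tau : trajT H =>
      qlog (qs tau) ((PK gamma K H * pphi tau / gs H)%:E * Psi tau)) = (ln Lsum)%:E.
Proof.
move=> hH.
have z0 := fZ_gt0 hH.
have k0 : 0 < PK gamma K H / gs H by rewrite divr_gt0 ?PK_gt0 ?gs_gt0.
have kz : PK gamma K H / gs H * fine (ZH H) = Lsum.
  rewrite gsE; have := PK_gt0 hH; have := Lsum_gt0 => L0 P0.
  by field; rewrite !gt_eqF.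
have -> : (fun tau : trajT H => qlog (qs tau) ((PK gamma K H * pphi tau / gs H)%:E * Psi tau)) =
    (fun tau => (ln Lsum)%:E * (qs tau)%:E)%E.
  apply: funext => tau; rewrite cE /qstar qlog_const //; first by rewrite kz.
  exact: ZHint_ge0.
rewrite (sintE muS muA muZ); last by apply: measurable_funeM; apply/measurable_EFinP; exact: m_qs.
rewrite integralZl //; first by rewrite int_qs // mule1.
apply: ge0_integrable; [by apply/measurable_EFinP; exact: m_qs | by move=> x; rewrite lee_fin qs_ge0 |].
by rewrite int_qs // ltry.
Qed.

Lemma part2 : Bbound muS muA muZ p0 p e pi r gamma K gs qs = elog (Jobj muS muA muZ p0 p e pi r gamma).
Proof.
rewrite elogJ /Defs.Bbound.
rewrite (eq_big_nat _ _ (F2 := fun H => (gs H * ln Lsum)%:E)); last first.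
  move=> H /andP[_ hH]; rewrite gt_eqF ?gs_gt0 // term_eq // EFinM //.
rewrite sumEFin -mulr_suml.
have -> : \sum_(0 <= H < K.+1) gs H = 1.
  rewrite (eq_big_nat _ _ (F2 := fun H => PK gamma K H * fine (ZH H) * Lsum^-1)) //.
  by rewrite -mulr_suml -/Lsum mulfV // gt_eqF // Lsum_gt0.
by rewrite mul1r.
Qed.
End Model.

Unset Implicit Arguments.
Set Strict Implicit.

Theorem mainTheorem5 (R : realType) (dS dA dZ : measure_display)
  (S : measurableType dS) (A : measurableType dA) (Z : measurableType dZ)
  (muS : {sigma_finite_measure set S -> \bar R})
  (muA : {sigma_finite_measure set A -> \bar R})
  (muZ : {sigma_finite_measure set Z -> \bar R})
  (p0 : S -> R) (p : S -> A -> S -> R) (e : S -> Z -> R) (pi : Z -> A -> R)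
  (r : S -> A -> R) (gamma : R) (K : nat) :
  0 < gamma < 1 ->
  (* p0 is a probability density on S *)
  (forall s, 0 <= p0 s) -> measurable_fun setT p0 ->
  (\int[muS]_s (p0 s)%:E = 1)%E ->
  (* p(. | s, a) is a transition density *)
  (forall s a s', 0 <= p s a s') ->
  measurable_fun setT (fun x : S * A * S => p x.1.1 x.1.2 x.2) ->
  (forall s a, \int[muS]_s' (p s a s')%:E = 1)%E ->
  (* encoder e(. | s) *)
  (forall s z, 0 <= e s z) ->
  measurable_fun setT (fun x : S * Z => e x.1 x.2) ->
  (forall s, \int[muZ]_z (e s z)%:E = 1)%E ->
  (* latent policy pi(. | z) *)
  (forall z a, 0 <= pi z a) ->
  measurable_fun setT (fun x : Z * A => pi x.1 x.2) ->
  (forall z, \int[muA]_a (pi z a)%:E = 1)%E ->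
  (* nonnegative measurable reward *)
  (forall s a, 0 <= r s a) ->
  measurable_fun setT (fun x : S * A => r x.1 x.2) ->
  (* Z_H finite and positive *)
  (forall H, (H <= K)%N ->
     (0 < ZH muS muA muZ p0 p e pi r gamma K H < +oo)%E) ->
  (forall (g : nat -> R) (q : forall H, trajT S A Z H -> R),
     is_prob K g -> is_traj_density muS muA muZ K q ->
     (Bbound muS muA muZ p0 p e pi r gamma K g q <=
        elog (Jobj muS muA muZ p0 p e pi r gamma))%E) /\
  Bbound muS muA muZ p0 p e pi r gamma K
    (gstar muS muA muZ p0 p e pi r gamma K)
    (qstar muS muA muZ p0 p e pi r gamma K) =
  elog (Jobj muS muA muZ p0 p e pi r gamma).
Proof.
move=> hg p0_ge0 mp0 p0int p_ge0 mp pint e_ge0 me eint pi_ge0 mpi piint r_ge0 mr hZ.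
split.
  by move=> g q hg' hq; apply: part1.
by apply: part2.
Qed.
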